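(* Let $G$ be a bipartite graph with bipartition $(X,Y)$, $|X| = n\geq 2$, $|Y|=m$, every $x\in X$ having degree at least $\delta$. Let $(C,x)$ be a tight pair in $G$, with $C = y_1x_1y_2x_2\ldots y_\ell x_\ell y_1$ where $x_i \in X$, $y_i \in Y$. Let $1\le i<j\le \ell$. If $x_i$ and $x_j$ are not crossing in $C$, then $|N(x_i)\cap V(C)| + |N(x_j)\cap V(C)| \leq |V(C)\cap Y| + 2$.
   Context: A tight pair in $G$ is a pair $(C,x)$ where $C$ is a longest cycle in $G$ and $x \in X \setminus V(C)$, chosen such that $|N(x)\cap V(C)|$ is maximum over all pairs $(C',x')$ with $C'$ a longest cycle and $x' \in X\setminus V(C')$. Indices of $C$ are taken modulo $\ell$; for $1\le a,b\le \ell$, $C[a,b]$ denotes the segment of $C$ traversed in the direction $y_1\to x_1 \to y_2 \to \cdots$ from $y_a$ to $y_b$. For $1\le i<j\le\ell$, $x_i$ and $x_j$ are crossing in $C$ if there are indices $i',j'\in[\ell]$ with $y_{i'}\in N(x_i)$, $y_{j'}\in N(x_j)$, and either (a) $i' = j'+1$ with $i+1\le j'\le j-1$ (so $y_{i'},y_{j'} \in V(C[i+1,j])$), or (b) $j' = i'+1 \pmod \ell$ and $y_{i'},y_{j'}\in V(C[j+1,i])$. *)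

(* Defs.v *)
From mathcomp Require Import all_boot.
Set Implicit Arguments. Unset Strict Implicit. Unset Printing Implicit Defensive.

Section Defs.
Variable T : finType.
Variable e : rel T.

Definition simple_graph := symmetric e /\ irreflexive e.

Definition bipartition (X Y : {set T}) :=
  [/\ X :&: Y = set0, X :|: Y = setT &
      forall u v, e u v -> (u \in X) && (v \in Y) || (u \in Y) && (v \in X)].

Definition N (v : T) : {set T} := [set w | e v w].

Definition is_cycle (c : seq T) := [&& uniq c, cycle e c & 3 <= size c].

Definition longest_cycle (c : seq T) :=
  is_cycle c /\ forall c', is_cycle c' -> size c' <= size c.

(* the cycle C = y_0 x_0 y_1 x_1 ... y_(l-1) x_(l-1) y_0 (0-based indices) *)
Definition cyc (l : nat) (yv xv : nat -> T) : seq T :=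
  flatten [seq [:: yv k; xv k] | k <- iota 0 l].

Definition degC (v : T) (c : seq T) := #|N v :&: [set w | w \in c]|.

Definition tight_pair (X : {set T}) (c : seq T) (x : T) :=
  [/\ longest_cycle c, x \in X, x \notin c &
      forall c' x', longest_cycle c' -> x' \in X -> x' \notin c' ->
        degC x' c' <= degC x c].

(* index k (mod l) of y_k lies in the segment C[a,b] (traversed forward) *)
Definition in_seg (l a b k : nat) :=
  (k %% l + l - a %% l) %% l <= (b %% l + l - a %% l) %% l.

Definition crossing (l : nat) (yv xv : nat -> T) (i j : nat) :=
  exists i' j', [/\ i' < l, j' < l, e (xv i) (yv i'), e (xv j) (yv j') &
    ((i' = j'.+1 /\ i.+1 <= j' <= j.-1) \/
     (j' = i'.+1 %% l /\ in_seg l j.+1 i i' /\ in_seg l j.+1 i j'))].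
End Defs.

(* Main.v *)
Require Import Defs.
From mathcomp Require Import all_boot zify.
Set Implicit Arguments. Unset Strict Implicit.

Lemma comb_aux (n : nat) (f g : nat -> bool) : 0 < n ->
  (forall k, k.+1 < n -> ~~ (f k && g k.+1)) ->
  \sum_(0 <= k < n) (f k + g k) <= n.-1 + g 0 + f n.-1.
Proof.
elim: n => [//|m IH] _ H.
rewrite big_nat_recr //=.
case: m IH H => [|m] IH H.
  by rewrite big_geq //= add0n addnC.
have := IH isT (fun k hk => H k (ltnW hk)).
have := H m (leqnn _).
simpl. case: (f m); case: (g m.+1); case: (f m.+1); case: (g m) => /=; lia.
Qed.

Lemma comb (n : nat) (f g : nat -> bool) : 0 < n ->
  (forall k, k.+1 < n -> ~~ (f k && g k.+1)) ->
  \sum_(0 <= k < n) (f k + g k) <= n.+1.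
Proof.
move=> n0 H; have := @comb_aux n f g n0 H.
case: (g 0); case: (f n.-1) => /=; lia.
Qed.

Lemma modE (l x : nat) : x < l + l -> x %% l = if x < l then x else x - l.
Proof.
move=> h; case: ifP => h2; first by rewrite modn_small.
have -> : x = (x - l) + l by lia.
rewrite modnDr modn_small; lia.
Qed.

Lemma cycS (T : finType) l (yv xv : nat -> T) :
  cyc l.+1 yv xv = cyc l yv xv ++ [:: yv l; xv l].
Proof. by rewrite /cyc -addn1 iotaD map_cat flatten_cat /= add0n. Qed.

Lemma mem_cyc (T : finType) l (yv xv : nat -> T) w :
  w \in cyc l yv xv -> exists2 k, k < l & (w = yv k \/ w = xv k).
Proof.
elim: l => [//|l IH]; rewrite cycS mem_cat => /orP [/IH [k hk H]|].
  by exists k => //; apply: ltnW.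
rewrite !inE => /orP [/eqP ->|/eqP ->]; exists l => //; tauto.
Qed.

Lemma mem_cycy (T : finType) l (yv xv : nat -> T) k :
  k < l -> yv k \in cyc l yv xv.
Proof.
elim: l => [//|l IH] hk; rewrite cycS mem_cat.
case: (ltnP k l) => h; first by rewrite IH.
have -> : k = l by lia.
by rewrite !inE eqxx orbT.
Qed.

Lemma inj_cyc (T : finType) l (yv xv : nat -> T) :
  uniq (cyc l yv xv) -> forall k1 k2, k1 < l -> k2 < l -> yv k1 = yv k2 -> k1 = k2.
Proof.
elim: l => [//|l IH]; rewrite cycS cat_uniq => /and3P [u1 nh _] k1 k2 h1 h2 E.
have nin : yv l \notin cyc l yv xv.
  by apply: contra nh => hin; apply/hasP; exists (yv l); rewrite ?inE ?eqxx.
case: (ltnP k1 l) => c1; case: (ltnP k2 l) => c2.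
- exact: IH.
- have e2 : k2 = l by lia. subst k2. by rewrite -E mem_cycy in nin.
- have e1 : k1 = l by lia. subst k1. by rewrite E mem_cycy in nin.
- lia.
Qed.

Lemma notXY {T : finType} {X Y : {set T}} {v} : X :&: Y = set0 -> v \in X -> v \in Y -> False.
Proof. move=> H a b. have : v \in X :&: Y by rewrite inE a b. by rewrite H inE. Qed.

Lemma degC_sum (T : finType) (e : rel T) X Y l yv xv v :
  bipartition e X Y -> v \in X -> (forall k, k < l -> yv k \in Y) ->
  (forall k, k < l -> xv k \in X) -> uniq (cyc l yv xv) ->
  degC e v (cyc l yv xv) = \sum_(0 <= k < l) e v (yv k).
Proof.
case=> XY _ E vX hY hX U; rewrite /degC.
have -> : N e v :&: [set w | w \in cyc l yv xv] =
   [set yv (nat_of_ord k) | k in [pred k : 'I_l | e v (yv k)]].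
  apply/setP => w; rewrite !inE; apply/idP/idP.
  - case/andP => ew; case/mem_cyc => k hk [] Ew; subst w.
      by apply/imsetP; exists (Ordinal hk); rewrite ?inE.
    move: (E _ _ ew); rewrite vX (hX _ hk) /= andbT => /orP [xY|vY].
      by case: (notXY XY (hX _ hk) xY).
    by case: (notXY XY vX vY).
  - case/imsetP => k; rewrite inE => ek ->; by rewrite ek mem_cycy.
rewrite card_imset; last first.
  by move=> a b /(inj_cyc U (ltn_ord a) (ltn_ord b)) /val_inj.
rewrite -sum1_card big_mkord big_mkcond /=; apply: eq_bigr => k _.
by rewrite inE; case: (e v (yv k)).
Qed.

Lemma cardY (T : finType) (e : rel T) X Y l yv xv :
  bipartition e X Y -> (forall k, k < l -> yv k \in Y) ->
  (forall k, k < l -> xv k \in X) -> uniq (cyc l yv xv) ->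
  #|Y :&: [set w | w \in cyc l yv xv]| = l.
Proof.
case=> XY _ E hY hX U.
have -> : Y :&: [set w | w \in cyc l yv xv] = [set yv (nat_of_ord k) | k in 'I_l].
  apply/setP => w; rewrite !inE; apply/idP/idP.
  - case/andP => wY; case/mem_cyc => k hk [] Ew; subst w.
      by apply/imsetP; exists (Ordinal hk).
    by case: (notXY XY (hX _ hk) wY).
  - case/imsetP => k _ ->; by rewrite hY // mem_cycy.
rewrite card_imset ?card_ord //.
by move=> a b /(inj_cyc U (ltn_ord a) (ltn_ord b)) /val_inj.
Qed.
Lemma seg_pos l a s : 0 < l -> a <= l -> s < l ->
  (((s + a) %% l) %% l + l - a %% l) %% l = s.
Proof.
move=> l0 al sl; rewrite modn_mod.
case: (ltnP a l) => h.
- rewrite (modn_small h) (@modE l (s + a)); last lia.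
  case: ifP => h2; rewrite modE; try lia; case: ifP; lia.
- have -> : a = l by lia.
  rewrite modnn modnDr (modn_small sl) subn0 modnDr modn_small //.
Qed.

Lemma seg_i l i j : i < j -> j < l ->
  (i %% l + l - j.+1 %% l) %% l = l - j.+1 + i.
Proof.
move=> ij jl; rewrite (@modn_small i l); last lia.
case: (ltnP j.+1 l) => h.
- rewrite (modn_small h) modE; try lia; case: ifP; lia.
- have -> : j.+1 = l by lia.
  rewrite modnn subn0 modnDr modn_small; lia.
Qed.

Unset Implicit Arguments.
Theorem lemma1 (T : finType) (e : rel T) (X Y : {set T}) (n m delta : nat)
  (l : nat) (yv xv : nat -> T) (x : T) (i j : nat) :
  simple_graph e -> bipartition e X Y ->
  #|X| = n -> 2 <= n -> #|Y| = m ->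
  (forall v, v \in X -> delta <= #|N e v|) ->
  (forall k, k < l -> yv k \in Y) -> (forall k, k < l -> xv k \in X) ->
  tight_pair e X (cyc l yv xv) x ->
  i < j -> j < l ->
  ~ crossing e l yv xv i j ->
  degC e (xv i) (cyc l yv xv) + degC e (xv j) (cyc l yv xv)
    <= #|Y :&: [set w | w \in cyc l yv xv]| + 2.
Proof.
move=> _ bip _ _ _ _ hY hX [[/and3P [U _ _] _] _ _ _] ij jl ncr.
rewrite (degC_sum bip (hX i _) hY hX U); last lia.
rewrite (degC_sum bip (hX j _) hY hX U) // (cardY bip hY hX U).
rewrite -big_split /=.
set h := fun k => e (xv i) (yv k) + e (xv j) (yv k).
have HA : \sum_(i.+1 <= k < j.+1) h k <= (j - i).+1.
  rewrite (big_addn 0 j.+1 i.+1).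
  have H : \sum_(0 <= t < j.+1 - i.+1) (e (xv j) (yv (t + i.+1)) + e (xv i) (yv (t + i.+1)))
      <= (j.+1 - i.+1).+1.
    apply: comb; first lia.
    move=> t ht; apply/negP => /andP [h1 h2]; apply: ncr.
    exists (t.+1 + i.+1), (t + i.+1); split; try lia.
  have -> : (j - i).+1 = (j.+1 - i.+1).+1 by lia.
  apply: leq_trans H; rewrite leq_eqVlt; apply/orP; left; apply/eqP.
  by apply/eqP; rewrite eqn_leq; apply/andP; split; apply: leq_sum => t _; rewrite /h addnC.
pose L := l - j.+1 + i.+1.
pose p t := (t + j.+1) %% l.
have HB : \sum_(0 <= k < i.+1) h k + \sum_(j.+1 <= k < l) h k <= L.+1.
  have E : \sum_(0 <= t < L) h (p t) = \sum_(j.+1 <= k < l) h k + \sum_(0 <= k < i.+1) h k.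
    rewrite (big_cat_nat _ (n := l - j.+1)) //=; last lia.
    congr (_ + _).
    - rewrite (big_addn 0 l j.+1); apply: eq_big_nat => t ht.
      rewrite /p modn_small //; lia.
    - rewrite (big_addn 0 L (l - j.+1)).
      have -> : L - (l - j.+1) = i.+1 by rewrite /L; lia.
      apply: eq_big_nat => t ht; rewrite /p.
      have -> : t + (l - j.+1) + j.+1 = t + l by lia.
      rewrite modnDr modn_small //; lia.
  rewrite addnC -E /h.
  apply: (@comb L (fun t => e (xv i) (yv (p t))) (fun t => e (xv j) (yv (p t)))).
    rewrite /L; lia.
  move=> t ht; apply/negP => /andP [h1 h2]; apply: ncr.
  exists (p t), (p t.+1); split.
  - rewrite /p ltn_pmod //; lia.
  - rewrite /p ltn_pmod //; lia.
  - exact h1.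
  - exact h2.
  - right; split.
    + by rewrite /p -[((t + j.+1) %% l).+1]addn1 modnDml addn1 addSn.
    + rewrite /in_seg /p !seg_pos ?seg_i //; rewrite /L in ht; lia.
rewrite (big_cat_nat _ (n := i.+1)) //=; last lia.
rewrite (big_cat_nat _ (n := j.+1) (m := i.+1)) //=; last lia.
rewrite /L /h /= in HB HA. lia.
Qed.
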